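(* Let $G$ be a simple bipartite graph with bipartition $\{X,Y\}$ and let $c,k$ be integers such that $3\le c\le \deg_G(x)\le k$ for every $x\in X$, and $|N_G(y)\cap N_G(z)|\ge k$ for every pair of distinct $y,z\in Y$. Then: (i) $|N_G(y)|\ge \frac{k(|Y|-1)}{k-1}$ for every $y\in Y$; (ii) $|N_G(B)\cap N_G(Y\setminus B)|\ge \frac{2|B|(|Y|-|B|)}{k-1}$ for every $B\subseteq Y$; (iii) if $|Y|\ge \mu(k-1)(2^{k-c-1}-2^c+1)$, where $\mu=\max_{u\in X}|\{v\in X: N_G(u)=N_G(v)\}|$, then $G$ has a spanning tree $F$ with $\deg_F(x)\le 2$ for every $x\in X$.
   Context: $N_G(A)$ denotes the set of vertices having a neighbor in $A$, and $N_G(x)=N_G(\{x\})$. *)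

(* Defs.v *)
From HB Require Import structures.
From mathcomp Require Import all_boot all_order all_algebra.
Set Implicit Arguments. Unset Strict Implicit. Unset Printing Implicit Defensive.
Import Order.TTheory GRing.Theory Num.Theory.

Definition simple_graph (V : finType) (G : rel V) : Prop :=
  symmetric G /\ irreflexive G.

Definition nbhd (V : finType) (G : rel V) (A : {set V}) : {set V} :=
  [set v | [exists a in A, G a v]].

Definition nbhd1 (V : finType) (G : rel V) (x : V) : {set V} :=
  nbhd G [set x].

Definition deg (V : finType) (G : rel V) (x : V) : nat := #|nbhd1 G x|.

Definition bipartition (V : finType) (G : rel V) (X Y : {set V}) : Prop :=
  [/\ X :&: Y = set0, X :|: Y = setT &
      forall u v, G u v -> (u \in X) && (v \in Y) || (u \in Y) && (v \in X)].

Definition subgraph (V : finType) (F G : rel V) : Prop :=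
  forall u v, F u v -> G u v.

Definition connected_graph (V : finType) (F : rel V) : Prop :=
  forall u v, connect F u v.

Definition has_cycle (V : finType) (F : rel V) : Prop :=
  exists (x : V) (p : seq V),
    [/\ uniq (x :: p), 2 <= size p, path F x p & F (last x p) x].

Definition is_tree (V : finType) (F : rel V) : Prop :=
  [/\ simple_graph F, connected_graph F & ~ has_cycle F].

Definition spanning_tree (V : finType) (G F : rel V) : Prop :=
  subgraph F G /\ is_tree F.

(* mu = max_{u in X} |{v in X : N_G(u) = N_G(v)}|  (0 if X is empty) *)
Definition mu (V : finType) (G : rel V) (X : {set V}) : nat :=
  \max_(u in X) #|[set v in X | nbhd1 G u == nbhd1 G v]|.

(* Main.v *)
Require Import Defs.
From HB Require Import structures.
From mathcomp Require Import all_boot all_order all_algebra zify.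
Import Order.TTheory GRing.Theory Num.Theory.

Lemma nbhd1E (V : finType) (G : rel V) x : nbhd1 G x = [set u | G x u].
Proof.
apply/setP=> u; rewrite !inE; apply/existsP/idP => [[a /andP[]]|h].
  by rewrite inE => /eqP->.
by exists x; rewrite inE eqxx.
Qed.

Lemma card_sum (V : finType) (P : pred V) : #|[set x | P x]| = \sum_x P x.
Proof. by rewrite -sum1_card big_mkcond /=; apply: eq_bigr => i _; rewrite inE; case: (P i). Qed.

Lemma card_sumA (V : finType) (A : {set V}) : #|A| = \sum_x (x \in A).
Proof. by rewrite -sum1_card big_mkcond /=; apply: eq_bigr => i _; case: (i \in A). Qed.

Lemma dcount (V : finType) (G : rel V) (A B : {set V}) :
  \sum_(y in A) \sum_(z in B) #|[set x | G y x && G z x]| =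
  \sum_x #|[set y in A | G y x]| * #|[set z in B | G z x]|.
Proof.
transitivity (\sum_y \sum_z \sum_x (((y \in A) && G y x) * ((z \in B) && G z x))).
  rewrite big_mkcond; apply: eq_bigr => y _ /=.
  case: (y \in A); last by rewrite big1 // => z _; rewrite big1.
  rewrite big_mkcond; apply: eq_bigr => z _ /=.
  rewrite card_sum; case: (z \in B) => /=; last by rewrite big1 // => x _; rewrite muln0.
  by apply: eq_bigr => x _; case: (G y x); case: (G z x).
under eq_bigr => y _ do rewrite exchange_big /=.
rewrite exchange_big /=.
apply: eq_bigr => x _; rewrite !card_sum big_distrl /=; apply: eq_bigr => y _.
by rewrite big_distrr.
Qed.

Lemma bipYX (V : finType) (G : rel V) (X Y : {set V}) u v :
  bipartition G X Y -> G u v -> u \in Y -> v \in X.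
Proof.
case=> /setP D _ H /H /orP[/andP[uX _]|/andP[_ //]] uY.
by have := D u; rewrite !inE uX uY.
Qed.

Lemma pairE (V : finType) (G : rel V) y z :
  nbhd1 G y :&: nbhd1 G z = [set x | G y x && G z x].
Proof. by apply/setP=> x; rewrite !nbhd1E !inE. Qed.

Lemma count1 (V : finType) (G : rel V) (X Y S : {set V}) (k : nat) z :
  symmetric G -> bipartition G X Y ->
  (forall x, x \in X -> deg G x <= k) ->
  (forall y z, y \in Y -> z \in Y -> y != z -> k <= #|nbhd1 G y :&: nbhd1 G z|) ->
  z \in Y -> S \subset Y -> z \notin S ->
  k * #|S| <= (k - 1) * #|[set x | G z x && [exists y in S, G y x]]|.
Proof.
move=> Hs Hb Hd Hp zY SY zS.
set C := [set x | _].
have step1 : k * #|S| <= \sum_(y in S) \sum_(z' in [set z]) #|[set x | G y x && G z' x]|.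
  rewrite -sum1_card big_distrr /=; apply: leq_sum => y yS.
  rewrite big_set1 muln1 -pairE; apply: Hp; first exact: (subsetP SY).
    by [].
  by apply/eqP=> e; move: zS; rewrite -e yS.
apply: (leq_trans step1); rewrite dcount [(k - 1) * _]mulnC.
have -> : #|C| * (k - 1) = \sum_x (x \in C) * (k - 1).
  by rewrite card_sum big_distrl /=; apply: eq_bigr => x _; rewrite inE.
apply: leq_sum => x _.
have -> : #|[set z' in [set z] | G z' x]| = G z x.
  case h: (G z x).
    rewrite /= -(cards1 z); apply: eq_card => u; rewrite !inE; case: eqP => // ->; by rewrite h.
  transitivity 0; last by []. rewrite -(cards0 V); apply: eq_card => u; rewrite !inE; case: eqP => // ->; by rewrite h.
case h: (G z x); last by rewrite muln0.
rewrite muln1.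
have xX : x \in X := @bipYX V G X Y z x Hb h zY.
case: (boolP (x \in C)) => xC; last first.
  rewrite mul0n leqn0 cards_eq0; apply/eqP/setP => y; rewrite !inE.
  apply/negbTE; apply: contra xC => /andP[yS Gyx]; rewrite inE h /=.
  by apply/existsP; exists y; rewrite yS.
rewrite mul1n.
have : [set y in S | G y x] \subset [set u | G x u] :\ z.
  apply/subsetP => y; rewrite !inE => /andP[yS Gyx]; rewrite (Hs x y) Gyx andbT.
  by apply: contraNneq zS => <-.
move/subset_leq_card => h1.
have h2 := cardsD1 z [set u | G x u]; rewrite inE (Hs x z) h in h2.
have h3 := Hd x xX; rewrite /deg nbhd1E in h3. lia.
Qed.

Lemma nbhdE (V : finType) (G : rel V) (A : {set V}) x :
  (x \in nbhd G A) = [exists a in A, G a x].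
Proof. by rewrite inE. Qed.

Lemma count2 (V : finType) (G : rel V) (X Y B : {set V}) (k : nat) :
  symmetric G -> bipartition G X Y -> 1 <= k ->
  (forall x, x \in X -> deg G x <= k) ->
  (forall y z, y \in Y -> z \in Y -> y != z -> k <= #|nbhd1 G y :&: nbhd1 G z|) ->
  B \subset Y ->
  2 * #|B| * #|Y :\: B| <= (k - 1) * #|nbhd G B :&: nbhd G (Y :\: B)|.
Proof.
move=> Hs Hb k1 Hd Hp BY.
set T := Y :\: B; set C := _ :&: _.
have step1 : k * #|B| * #|T| <= \sum_(y in B) \sum_(z in T) #|[set x | G y x && G z x]|.
  rewrite [k * _]mulnC -mulnA [#|B| * _]mulnC mulnC -sum1_card big_distrl /=; apply: leq_sum => y yB.
  rewrite mul1n -sum1_card big_distrr /=; apply: leq_sum => z zT.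
  rewrite muln1 -pairE; apply: Hp; first exact: (subsetP BY).
    by move: zT; rewrite inE => /andP[].
  by apply/eqP=> e; move: zT; rewrite inE -e yB.
have step2 : 2 * (\sum_x #|[set y in B | G y x]| * #|[set z in T | G z x]|)
      <= #|C| * (k * (k - 1)).
  rewrite big_distrr /=.
  have -> : #|C| * (k * (k - 1)) = \sum_x (x \in C) * (k * (k - 1)).
    by rewrite card_sumA big_distrl /=.
  apply: leq_sum => x _.
  set a := #|_|; set b := #|_|.
  case: (posnP a) => [->|apos]; first by rewrite ?mul0n ?muln0.
  case: (posnP b) => [->|bpos]; first by rewrite ?mul0n ?muln0.
  have [y yA] : exists y, y \in [set y in B | G y x].
    by apply/set0Pn; rewrite -card_gt0.
  have [z zA] : exists z, z \in [set z in T | G z x].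
    by apply/set0Pn; rewrite -card_gt0.
  move: yA zA; rewrite !inE => /andP[yB Gyx] /andP[zT Gzx].
  rewrite (_ : _ && _ = true); last first.
    apply/andP; split; apply/existsP; [exists y; by rewrite yB | exists z; move: zT; rewrite !inE => /andP[-> ->]; by rewrite Gzx].
  rewrite mul1n.
  have xX : x \in X := @bipYX V G X Y y x Hb Gyx (subsetP BY y yB).
  have hab : a + b <= k.
    apply: leq_trans (Hd x xX); rewrite /deg nbhd1E.
    have <- : #|[set y in B | G y x] :|: [set z in T | G z x]| = a + b.
      rewrite cardsU; suff -> : [set y in B | G y x] :&: [set z in T | G z x] = set0.
        by rewrite cards0 subn0.
      apply/setP => u; rewrite !inE; case: (u \in B); by rewrite ?andbF.
    apply: subset_leq_card; apply/subsetP => u; rewrite !inE (Hs x u).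
    by case/orP => /andP[].
  nia.
rewrite dcount in step1.
have h3 : k * (2 * #|B| * #|T|) <= k * ((k - 1) * #|C|).
  set S := \sum_x _ in step1 step2.
  set b := #|B| in step1 *; set t := #|T| in step1 *; set c := #|C| in step2 *.
  nia.
by rewrite leq_pmul2l in h3.
Qed.

Set Implicit Arguments.
Definition tree_on (V : finType) (F : rel V) (W : {set V}) :=
  [/\ symmetric F, irreflexive F, (forall a b, F a b -> a \in W),
      (forall a b, a \in W -> b \in W -> connect F a b) & ~ has_cycle F].

Definition addE (V : finType) (F : rel V) (v w : V) : rel V :=
  fun a b => [|| F a b, (a == v) && (b == w) | (a == w) && (b == v)].

Arguments addE {V}.
Arguments tree_on {V}.
Lemma addE_v (V : finType) (F : rel V) (W : {set V}) v w u :
  (forall a b, F a b -> a \in W) -> v \notin W -> v != w ->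
  addE F v w v u = (u == w).
Proof.
move=> HW vW vw; rewrite /addE eqxx /= (negbTE vw) /= orbF.
by case h: (F v u) => //; move: vW; rewrite (HW _ _ h).
Qed.

Lemma add_leaf (V : finType) (F : rel V) (W : {set V}) v w :
  tree_on F W -> v \notin W -> w \in W -> tree_on (addE F v w) (v |: W).
Proof.
case=> Hs Hi HW Hc Hn vW wW.
have vw : v != w by apply: contraNneq vW => ->.
have Fv u : addE F v w v u = (u == w) by apply: (@addE_v _ F W v w u).
have Hs' : symmetric (addE F v w).
  move=> a b; rewrite /addE Hs; case: (F b a) => //=.
  by case: (a == v); case: (b == w); case: (a == w); case: (b == v).
have Fv' u : addE F v w u v = (u == w) by rewrite Hs'.
split => //.
- move=> a; rewrite /addE Hi /=; case: (a =P v) => [->|/eqP av]; by rewrite ?andbF ?(negbTE vw) ?orbF.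
- move=> a b; rewrite /addE !inE; case/or3P => [/HW ->|/andP[/eqP -> _]|/andP[/eqP -> _]];
    by rewrite ?eqxx ?wW ?orbT.
- have sub : subrel (connect F) (connect (addE F v w)).
    apply: connect_sub => a b h; apply: connect1; by rewrite /addE h.
  have cvw : forall a, a \in W -> connect (addE F v w) v a.
    move=> a aW; apply: connect_trans (sub _ _ (Hc _ _ wW aW)).
    by apply: connect1; rewrite Fv.
  have cwv : forall a, a \in W -> connect (addE F v w) a v.
    move=> a aW; apply: connect_trans (sub _ _ (Hc _ _ aW wW)) _.
    by apply: connect1; rewrite Fv'.
  move=> a b; rewrite !inE => /orP[/eqP->|aW] /orP[/eqP->|bW].
  + exact: connect0.
  + exact: cvw.
  + exact: cwv.
  + exact: sub (Hc _ _ aW bW).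
- case=> x [p [Hu Hsz Hp Hl]].
  case: (boolP (v \in x :: p)) => vs.
    have Hcyc : cycle (addE F v w) (x :: p) by rewrite /= rcons_path Hp Hl.
    case: (rot_to vs) => i s' Hr.
    move: Hcyc Hu; rewrite -(rot_cycle i) -(rot_uniq i) Hr.
    have : size s' = size p by have := size_rot i (x :: p); rewrite Hr /= => [[]].
    case: s' Hr => [|a [|b q]] Hr //=; first by move=> e; rewrite -e in Hsz.
      by move=> e; rewrite -e in Hsz.
    move=> _; rewrite Fv => /and3P[/eqP aw _]; rewrite rcons_path => /andP[_].
    rewrite Fv' => /eqP lw /and4P[_ anq _ _]; move: anq.
    by rewrite aw -lw mem_last.
  apply: Hn; exists x, p; split => //.
    apply: (@sub_in_path _ (predC1 v) (addE F v w)) Hp; last by rewrite all_predC has_pred1.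
    move=> a b /= av bv; rewrite /addE (negbTE av) (negbTE bv) /= andbF orbF.
    by [].
  move: Hl; rewrite /addE; case/or3P => // /andP[/eqP e /eqP e'].
    by move: vs; rewrite -e mem_last.
  by move: vs; rewrite -e' inE eqxx.
Qed.

Lemma nb_addE_other (V : finType) (F : rel V) v w a :
  a != v -> a != w -> [set u | addE F v w a u] = [set u | F a u].
Proof.
move=> av aw; apply/setP => u; rewrite !inE /addE (negbTE av) (negbTE aw) /=.
by rewrite orbF.
Qed.

Lemma nb_addE_v (V : finType) (F : rel V) (W : {set V}) v w :
  (forall a b, F a b -> a \in W) -> v \notin W -> v != w ->
  #|[set u | addE F v w v u]| = 1.
Proof.
move=> HW vW vw; rewrite -(cards1 w); apply: eq_card => u; rewrite !inE.
exact: addE_v HW vW vw.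
Qed.

Lemma nb_addE_w (V : finType) (F : rel V) v w :
  #|[set u | addE F v w w u]| <= #|[set u | F w u]|.+1.
Proof.
have : [set u | addE F v w w u] \subset v |: [set u | F w u].
  apply/subsetP => u; rewrite !inE /addE.
  case/or3P => [->|/andP[/eqP -> /eqP ->]|/andP[_ ->]]; by rewrite ?orbT ?eqxx.
move/subset_leq_card/leq_trans; apply; rewrite cardsU1 -add1n leq_add2r.
exact: leq_b1.
Qed.

Lemma bipXY (V : finType) (G : rel V) (X Y : {set V}) u v :
  bipartition G X Y -> G u v -> u \in X -> v \in Y.
Proof.
case=> /setP D _ H /H /orP[/andP[_ //]|/andP[uY _]] uX.
by have := D u; rewrite !inE uX uY.
Qed.

Lemma XnY (V : finType) (G : rel V) (X Y : {set V}) u :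
  bipartition G X Y -> u \in X -> u \in Y -> False.
Proof. by case=> /setP D _ _ uX uY; have := D u; rewrite !inE uX uY. Qed.

Definition degX (V : finType) (F : rel V) (X : {set V}) :=
  forall x, x \in X -> #|[set u | F x u]| <= 2.
Arguments degX {V}.

Lemma phase2 (V : finType) (G : rel V) (X Y : {set V}) :
  symmetric G -> bipartition G X Y ->
  (forall x, x \in X -> exists u, G x u) ->
  forall n (U : {set V}) (F : rel V), #|X :\: U| = n -> U \subset X ->
  tree_on F (Y :|: U) -> subgraph F G -> degX F X ->
  exists F', [/\ tree_on F' (Y :|: X), subgraph F' G & degX F' X].
Proof.
move=> Hs Hb Hpos; elim=> [|n IH] U F HU UX Ht Hsub Hd.
  exists F; split => //; suff -> : X = U by [].
  apply/eqP; rewrite eqEsubset UX andbT; apply/subsetP => x xX.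
  by apply: contraT => xU; move: HU; rewrite (cardsD1 x) !inE xU xX.
have [x] : exists x, x \in X :\: U by apply/set0Pn; rewrite -card_gt0 HU.
rewrite inE => /andP[xU xX].
have [y Gxy] := Hpos x xX.
have yY : y \in Y := @bipXY V G X Y x y Hb Gxy xX.
have xW : x \notin Y :|: U.
  by rewrite !inE negb_or xU andbT; apply/negP => xY; apply: (@XnY V G X Y x Hb xX xY).
have yW : y \in Y :|: U by rewrite inE yY.
have Ht' := @add_leaf V F (Y :|: U) x y Ht xW yW.
have xy : x != y by apply/negP => /eqP e; apply: (@XnY V G X Y x Hb xX); rewrite e.
apply: (IH (x |: U) (addE F x y)).
- move: HU; rewrite (cardsD1 x) !inE xU xX add1n => -[<-]; apply: eq_card => u.
  by rewrite !inE negb_or; case: (u == x); rewrite ?andbF.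
- by rewrite subUset sub1set xX UX.
- by move: Ht'; rewrite setUCA.
- move=> a b; rewrite /addE; case/or3P => [/Hsub //|/andP[/eqP -> /eqP ->] //|].
  by case/andP => /eqP -> /eqP ->; rewrite Hs.
- move=> a aX; case: (a =P x) => [->|/eqP ax].
    case: Ht => _ _ HW _ _; by rewrite (@nb_addE_v V F (Y :|: U) x y HW xW xy).
  rewrite nb_addE_other //; first exact: Hd.
  by apply/eqP => e; apply: (@XnY V G X Y a Hb aX); rewrite e.
Qed.

Lemma phase1 (V : finType) (G : rel V) (X Y : {set V}) (k : nat) :
  symmetric G -> bipartition G X Y -> 1 <= k ->
  (forall x, x \in X -> deg G x <= k) ->
  (forall y z, y \in Y -> z \in Y -> y != z -> k <= #|nbhd1 G y :&: nbhd1 G z|) ->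
  forall n (S U : {set V}) (F : rel V), #|Y :\: S| = n -> S \subset Y -> U \subset X ->
  #|U| < #|S| -> tree_on F (S :|: U) -> subgraph F G -> degX F X ->
  exists (U' : {set V}) (F' : rel V), [/\ U' \subset X, tree_on F' (Y :|: U'), subgraph F' G & degX F' X].
Proof.
move=> Hs Hb k1 Hd Hp; elim=> [|n IH] S U F HS SY UX USc Ht Hsub Hdg.
  exists U, F; split => //; suff -> : Y = S by [].
  apply/eqP; rewrite eqEsubset SY andbT; apply/subsetP => y yY.
  by apply: contraT => yS; move: HS; rewrite (cardsD1 y) !inE yS yY.
have [z] : exists z, z \in Y :\: S by apply/set0Pn; rewrite -card_gt0 HS.
rewrite inE => /andP[zS zY].
set C := [set x | G z x && [exists y in S, G y x]].
have hc := @count1 V G X Y S k z Hs Hb Hd Hp zY SY zS.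
have : ~~ (C \subset U).
  apply/negP => /subset_leq_card CU.
  have : k * #|S| <= (k - 1) * #|U| by apply: leq_trans hc _; rewrite leq_mul2l CU orbT.
  move: USc; set s := #|S|; set u := #|U|; nia.
case/subsetPn => x; rewrite inE => /andP[Gzx /existsP[y /andP[yS Gyx]]] xU.
have xX : x \in X := @bipYX V G X Y z x Hb Gzx zY.
have yY : y \in Y := subsetP SY y yS.
have xY : x \notin Y by apply/negP => xY; apply: (@XnY V G X Y x Hb xX xY).
have xW : x \notin S :|: U.
  by rewrite inE negb_or xU andbT; apply: contra xY; apply: (subsetP SY).
have yW : y \in S :|: U by rewrite inE yS.
have Ht1 := @add_leaf V F (S :|: U) x y Ht xW yW.
have zU : z \notin U by apply/negP => /(subsetP UX) zX; apply: (@XnY V G X Y z Hb zX zY).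
have zx : z != x by apply: contraNneq xY => <-.
have zW : z \notin x |: (S :|: U) by rewrite !inE negb_or zx /= negb_or zS zU.
have xW1 : x \in x |: (S :|: U) by rewrite !inE eqxx.
have Ht2 := @add_leaf V (addE F x y) (x |: (S :|: U)) z x Ht1 zW xW1.
have xy : x != y by apply: contraNneq xY => ->.
case: (Ht1) => _ _ HW1 _ _.
case: (Ht) => _ _ HW _ _.
apply: (IH (z |: S) (x |: U) (addE (addE F x y) z x)).
- move: HS; rewrite (cardsD1 z) !inE zS zY add1n => -[<-]; apply: eq_card => u.
  by rewrite !inE negb_or; case: (u == z); rewrite ?andbF.
- by rewrite subUset sub1set zY SY.
- by rewrite subUset sub1set xX UX.
- by rewrite !cardsU1 zS xU.
- suff -> : (z |: S) :|: (x |: U) = z |: (x |: (S :|: U)) by [].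
  apply/setP => u; rewrite !inE.
  by case: (u == z); case: (u == x); case: (u \in S); case: (u \in U).
- move=> a b; rewrite /addE; case/or3P => [|/andP[/eqP -> /eqP ->] //|]; last first.
    by case/andP => /eqP -> /eqP ->; rewrite Hs.
  case/or3P => [/Hsub //|/andP[/eqP -> /eqP ->]|]; first by rewrite Hs.
  by case/andP => /eqP -> /eqP ->.
- move=> a aX.
  have az : a != z by apply: contraTneq aX => ->; apply/negP => zX; apply: (@XnY V G X Y z Hb zX zY).
  have ay : a != y by apply: contraTneq aX => ->; apply/negP => yX; apply: (@XnY V G X Y y Hb yX yY).
  case: (a =P x) => [->|/eqP ax].
    apply: leq_trans (@nb_addE_w V (addE F x y) z x) _.
    by rewrite (@nb_addE_v V F (S :|: U) x y HW xW xy).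
  rewrite nb_addE_other // nb_addE_other //; exact: Hdg.
Qed.

Local Open Scope ring_scope.

Lemma rat_part1 (k n m : nat) : (3 <= k)%N -> (1 <= n)%N -> (k * (n - 1) <= (k - 1) * m)%N ->
  k%:Q * (n%:Q - 1) / (k%:Q - 1) <= m%:Q.
Proof.
move=> k3 n1 h.
have kpos : 0 < k%:Q - 1 by rewrite subr_gt0 ltr1n; apply: leq_trans k3.
rewrite ler_pdivrMr //.
have : (k * (n - 1))%:R <= ((k - 1) * m)%:R :> rat by rewrite ler_nat.
rewrite !natrM !natrB //; last by apply: leq_trans k3.
by rewrite -!pmulrn [m%:R * _]mulrC.
Qed.

Lemma rat_part2 (k b n m : nat) : (3 <= k)%N -> (b <= n)%N -> (2 * b * (n - b) <= (k - 1) * m)%N ->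
  2 * b%:Q * (n%:Q - b%:Q) / (k%:Q - 1) <= m%:Q.
Proof.
move=> k3 bn h.
have kpos : 0 < k%:Q - 1 by rewrite subr_gt0 ltr1n; apply: leq_trans k3.
rewrite ler_pdivrMr //.
have : (2 * b * (n - b))%:R <= ((k - 1) * m)%:R :> rat by rewrite ler_nat.
rewrite !natrM !natrB //; last by apply: leq_trans k3.
by rewrite -!pmulrn [m%:R * _]mulrC.
Qed.

Theorem lemma2p4 (V : finType) (G : rel V) (X Y : {set V}) (c k : nat) :
  simple_graph G ->
  bipartition G X Y ->
  (3 <= c)%N -> (c <= k)%N ->
  (forall x, x \in X -> (c <= deg G x)%N && (deg G x <= k)%N) ->
  (forall y z, y \in Y -> z \in Y -> y != z ->
     (k <= #|nbhd1 G y :&: nbhd1 G z|)%N) ->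
  [/\ (forall y, y \in Y ->
         (k%:Q * (#|Y|%:Q - 1) / (k%:Q - 1) <= (#|nbhd1 G y|)%:Q)),
      (forall B : {set V}, B \subset Y ->
         (2 * #|B|%:Q * (#|Y|%:Q - #|B|%:Q) / (k%:Q - 1)
            <= (#|nbhd G B :&: nbhd G (Y :\: B)|)%:Q))
    & ((mu G X)%:Q * (k%:Q - 1)
          * ((2%:Q) ^ (k%:Z - c%:Z - 1) - (2%:Q) ^+ c + 1) <= #|Y|%:Q ->
       exists F : rel V, spanning_tree G F /\
         (forall x, x \in X -> (deg F x <= 2)%N))].
Proof.
move=> [Hs Hi] Hb c3 ck Hdeg Hp.
have k3 : (3 <= k)%N by apply: leq_trans ck.
have k1 : (1 <= k)%N by apply: leq_trans k3.
have Hd : forall x, x \in X -> (deg G x <= k)%N by move=> x /Hdeg /andP[].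
split.
- move=> y yY.
  have := @count1 V G X Y (Y :\ y) k y Hs Hb Hd Hp yY (subD1set Y y).
  rewrite !inE eqxx /= => /(_ isT) h.
  apply: rat_part1 => //; first by rewrite card_gt0; apply/set0Pn; exists y.
  apply: leq_trans (leq_trans h _).
    by rewrite (cardsD1 y Y) yY add1n subn1.
  rewrite leq_mul2l; apply/orP; right; apply: subset_leq_card.
  by apply/subsetP => x; rewrite nbhd1E !inE => /andP[].
- move=> B BY.
  have := @count2 V G X Y B k Hs Hb k1 Hd Hp BY.
  rewrite cardsD (setIidPr BY) => h.
  by apply: rat_part2 => //; apply: subset_leq_card.
- move=> _.
  have Hpos : forall x, x \in X -> exists u, G x u.
    move=> x /Hdeg /andP[cd _].
    have : (0 < #|nbhd1 G x|)%N by apply: leq_trans cd; apply: leq_trans c3.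
    rewrite card_gt0 => /set0Pn [u]; rewrite nbhd1E inE => Gxu; by exists u.
  have [F [Ht Hsub Hdg]] : exists F', [/\ tree_on F' (Y :|: X), subgraph F' G & degX F' X].
    have F0t : forall W : {set V}, (#|W| <= 1)%N -> tree_on (fun _ _ : V => false) W.
      move=> W W1; split => //.
      + move=> a b aW bW; suff -> : a = b by apply: connect0.
        have : (#|W :\ a| = 0)%N by have := cardsD1 a W; rewrite aW; move: W1; lia.
        move/eqP; rewrite cards_eq0 => /eqP/setP/(_ b); rewrite !inE bW andbT.
        by move/negbFE/eqP.
      + case=> x [p [_ Hsz Hpp _]]; move: Hsz Hpp; case: p => //=.
    have Fdeg : degX (fun _ _ : V => false) X.
      by move=> x _; rewrite (_ : [set u | false] = set0) ?cards0 //; apply/setP => u; rewrite !inE.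
    case: (set_0Vmem Y) => [Y0|[y0 y0Y]].
      apply: (@phase2 V G X Y Hs Hb Hpos _ set0 (fun _ _ => false) erefl (sub0set X)) => //.
      by apply: F0t; rewrite setU0 Y0 cards0.
    have c01 : (#|@set0 V| < #|[set y0]|)%N by rewrite cards0 cards1.
    have t0 : tree_on (fun _ _ : V => false) ([set y0] :|: set0).
      by apply: F0t; rewrite setU0 cards1.
    have y0s : [set y0] \subset Y by rewrite sub1set.
    have [U [F [UX Ht Hsub Hdg]]] := @phase1 V G X Y k Hs Hb k1 Hd Hp _ [set y0] set0
       (fun _ _ => false) erefl y0s (sub0set X) c01 t0 (fun _ _ (h : false) => False_ind _ (notF h)) Fdeg.
    exact: (@phase2 V G X Y Hs Hb Hpos _ U F erefl UX Ht Hsub Hdg).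
  have WT : Y :|: X = setT.
    by case: Hb => _ /setP H _; apply/setP => u; rewrite setUC H.
  rewrite WT in Ht; case: Ht => Fs Fi _ Fc Fn.
  have Tt : is_tree F.
    split; [by split | move=> u v; exact: (Fc u v (in_setT u) (in_setT v)) | exact: Fn].
  exists F; split; first by split.
  by move=> x xX; rewrite /deg nbhd1E; apply: Hdg.
Qed.
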